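(* Any (possibly randomized) online algorithm for the online degree-bounded Steiner tree problem has (multiplicative) competitive ratio $\Omega(\log n)$, where $n$ is the number of vertices; this holds already when $b_v=1$ for every vertex $v$. That is, there is an absolute constant $c>0$ such that for arbitrarily large $n$ and every online algorithm $A$ there exist a graph on $n$ vertices with all degree bounds equal to $1$, a root, and a terminal sequence such that the expected maximum degree of $A$'s output is at least $c\log n\cdot\mathrm{OPT}$.
   Context: Online degree-bounded Steiner tree: an undirected graph $G$, a root vertex, and degree bounds $b_v$ are given in advance; terminals arrive one by one, and upon arrival of each terminal the online algorithm must add edges (edges are never removed) so that every terminal seen so far is connected to the root. The load of $v$ in a subgraph $H$ is $\deg_H(v)/b_v$; the objective is to minimize the maximum load of the final subgraph. $\mathrm{OPT}$ is the minimum maximum load over all subgraphs connecting all the terminals to the root. The competitive ratio is the worst case of the (expected) maximum load of the algorithm's output divided by $\mathrm{OPT}$. *)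

(* Defs.v *)
From HB Require Import structures.
From mathcomp Require Import all_boot all_order all_algebra.
From mathcomp Require Import all_classical all_reals all_analysis.
Set Implicit Arguments. Unset Strict Implicit. Unset Printing Implicit Defensive.
Import Order.TTheory GRing.Theory Num.Theory.
Local Open Scope ring_scope.

(* Vertices of a graph on n vertices: 'I_n.  An undirected graph is a
   symmetric irreflexive relation G; an edge is the 2-element set {u,v}.
   A subgraph is a set of edges (a {set {set 'I_n}}). *)

Definition simple_graph n (G : rel 'I_n) : Prop :=
  symmetric G /\ irreflexive G.

Definition edges_of n (G : rel 'I_n) : {set {set 'I_n}} :=
  [set [set x.1; x.2] | x in [set x : 'I_n * 'I_n | G x.1 x.2]].

Definition adj n (H : {set {set 'I_n}}) : rel 'I_n :=
  fun x y => [set x; y] \in H.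

Definition connects n (H : {set {set 'I_n}}) (r : 'I_n) (ts : seq 'I_n) : bool :=
  all (connect (adj H) r) ts.

Definition deg n (H : {set {set 'I_n}}) (v : 'I_n) : nat :=
  #|[set e in H | v \in e]|.

Definition maxload (R : realType) n (H : {set {set 'I_n}}) (b : 'I_n -> nat) : R :=
  \big[Num.max/0]_(v : 'I_n) ((deg H v)%:R / (b v)%:R).

Definition feasible n (G : rel 'I_n) (r : 'I_n) (ts : seq 'I_n)
  (H : {set {set 'I_n}}) : bool :=
  (H \subset edges_of G) && connects H r ts.

(* The default value of the
   big min is the load of the whole graph, which is feasible (hence the min is
   the true optimum) whenever every terminal is connected to r in G. *)
Definition opt (R : realType) n (G : rel 'I_n) (r : 'I_n) (b : 'I_n -> nat)
  (ts : seq 'I_n) : R :=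
  \big[Num.min/maxload R (edges_of G) b]_(H | feasible G r ts H) maxload R H b.

(* A deterministic online algorithm on n-vertex instances: given the graph, root
   and degree bounds in advance, and the prefix s of terminals arrived so far,
   it returns the current subgraph (after processing the last terminal of s).
   Online-ness is built in: the answer depends only on the prefix. *)
Definition online_alg n :=
  rel 'I_n -> 'I_n -> ('I_n -> nat) -> seq 'I_n -> {set {set 'I_n}}.

Definition valid_alg n (A : online_alg n) : Prop :=
  forall G r b s,
    A G r b s \subset edges_of G /\
    (forall t, A G r b s \subset A G r b (rcons s t)) /\
    (connects (edges_of G) r s -> connects (A G r b s) r s).

(* A randomized online algorithm: a family of deterministic online algorithms
   indexed by the outcome w of a probability space, such that for each input the
   output is a random variable (measurable). *)
Definition measurable_alg d (Omega : measurableType d) n (A : Omega -> online_alg n)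
  : Prop :=
  forall G r b s (H : {set {set 'I_n}}),
    measurable [set w | A w G r b s = H].

(* Main.v *)
Require Import Defs.
From HB Require Import structures.
From mathcomp Require Import all_boot all_order all_algebra.
From mathcomp Require Import all_classical all_reals all_analysis.
From mathcomp Require Import zify.
Import Order.TTheory GRing.Theory Num.Theory.

Set Implicit Arguments. Unset Strict Implicit. Unset Printing Implicit Defensive.

Lemma set2_eqP (T : finType) (a b c d : T) :
  [set a; b] = [set c; d] -> (a = c /\ b = d) \/ (a = d /\ b = c).
Proof.
move=> E.
have Ha : a \in [set c; d] by rewrite -E !inE eqxx.
have Hb : b \in [set c; d] by rewrite -E !inE eqxx orbT.
have Hc : c \in [set a; b] by rewrite E !inE eqxx.
have Hd : d \in [set a; b] by rewrite E !inE eqxx orbT.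
move: Ha Hb Hc Hd; rewrite !inE.
case/orP=> /eqP Ea; case/orP=> /eqP Eb; case/orP=> /eqP Ec; case/orP=> /eqP Ed;
  subst; auto.
Qed.

Lemma connect_last_step (T : finType) (e : rel T) r x :
  connect e r x -> x != r -> exists y, e y x.
Proof.
case/connectP=> p; elim/last_ind: p => [|p y _] /=; first by move=> _ ->; rewrite eqxx.
rewrite rcons_path last_rcons => /andP[_ ey] -> _; by exists (last r p).
Qed.

Section Comb.
Variable k : nat.
Hypothesis k_gt0 : (0 < k)%N.

Definition srv := {ffun 'I_k -> bool}.
Definition V := (srv + ('I_k * srv))%type.
Definition nV := #|{: V}|.
Definition vid (v : V) : 'I_nV := enum_rank v.
Definition vval (x : 'I_nV) : V := enum_val x.

Lemma vidK : cancel vid vval. Proof. exact: enum_rankK. Qed.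
Lemma vvalK : cancel vval vid. Proof. exact: enum_valK. Qed.
Lemma vid_inj : injective vid. Proof. exact: can_inj vidK. Qed.

Definition rk (u : srv) : nat := enum_rank u.

Definition pathE (u v : srv) : bool := (rk v == (rk u).+1) || (rk u == (rk v).+1).

Definition agree (j : 'I_k) (u v : srv) : bool := [forall i : 'I_k, (i < j)%N ==> (u i == v i)].

Definition EG (a b : V) : bool :=
  match a, b with
  | inl u, inl v => pathE u v
  | inl v, inr (j, u) => agree j v u
  | inr (j, u), inl v => agree j v u
  | _, _ => false
  end.

Definition G : rel 'I_nV := fun x y => EG (vval x) (vval y).

Lemma pathE_sym : symmetric pathE.
Proof. by move=> u v; rewrite /pathE orbC. Qed.

Lemma EG_sym : symmetric EG.
Proof. by case=> [u|[j u]] [v|[j' v]] //=; rewrite pathE_sym. Qed.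

Lemma G_simple : simple_graph G.
Proof.
split; first by move=> x y; rewrite /G EG_sym.
move=> x; rewrite /G; case: (vval x) => [u|[j u]] //=.
by rewrite /pathE orbb eqn_leq ltnn andbF.
Qed.

Lemma card_srv : #|{: srv}| = (2 ^ k)%N.
Proof. by rewrite card_ffun card_bool card_ord. Qed.

Lemma srv_pos : (0 < #|{: srv}|)%N.
Proof. by rewrite card_srv expn_gt0. Qed.

Definition srv0 : srv := enum_val (Ordinal srv_pos).
Lemma rk_srv0 : rk srv0 = 0%N.
Proof. by rewrite /rk /srv0 enum_valK. Qed.

Definition r0 : 'I_nV := vid (inl srv0).


Lemma agree_refl j u : agree j u u.
Proof. by apply/forallP=> i; rewrite eqxx implybT. Qed.

Lemma agree_sym j u v : agree j u v = agree j v u.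
Proof. by apply/forallP/forallP=> H i; rewrite eq_sym; apply: H. Qed.

Lemma agree_trans j u v w : agree j u v -> agree j v w -> agree j u w.
Proof.
move=> /forallP H1 /forallP H2; apply/forallP=> i; apply/implyP=> ij.
by rewrite (eqP (implyP (H1 i) ij)) (implyP (H2 i) ij).
Qed.

Lemma agree_le (j j' : 'I_k) u v : (j' <= j)%N -> agree j u v -> agree j' u v.
Proof.
move=> le /forallP H; apply/forallP=> i; apply/implyP=> ij.
exact: (implyP (H i) (leq_trans ij le)).
Qed.

Definition phase (j : 'I_k) (s : srv) : seq 'I_nV :=
  [seq vid (inr (j, u)) | u <- enum [pred u | agree j u s]].

Definition ts_upto (i : nat) (s : srv) : seq 'I_nV :=
  flatten [seq phase j s | j <- take i (enum 'I_k)].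

Definition ts (s : srv) := ts_upto k s.

Lemma mem_take_ord (i : nat) (j : 'I_k) : (j \in take i (enum 'I_k)) = (j < i)%N.
Proof. by rewrite in_take ?mem_enum // index_enum_ord. Qed.

Lemma mem_ts_upto i s x : x \in ts_upto i s ->
  exists j u, [/\ x = vid (inr (j, u)), agree j u s & (j < i)%N].
Proof.
case/flatten_mapP=> j; rewrite mem_take_ord => ji /mapP[u].
rewrite mem_enum inE => aus ->; by exists j, u.
Qed.

Lemma term_in j u s : agree j u s -> vid (inr (j, u)) \in ts_upto j.+1 s.
Proof.
move=> aus; apply/flatten_mapP; exists j; first by rewrite mem_take_ord.
by apply/mapP; exists u; rewrite // mem_enum inE.
Qed.

Lemma ts_upto_cat i s : exists t, ts s = ts_upto i s ++ t.
Proof.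
exists (flatten [seq phase j s | j <- drop i (enum 'I_k)]).
by rewrite /ts /ts_upto -flatten_cat -map_cat cat_take_drop take_oversize // size_enum_ord.
Qed.

Lemma ts_upto_agree (j : 'I_k) s s' : agree j s s' -> ts_upto j.+1 s = ts_upto j.+1 s'.
Proof.
move=> a; rewrite /ts_upto; congr flatten; apply/eq_in_map => j'.
rewrite mem_take_ord ltnS => le; rewrite /phase; congr map; apply: eq_enum => u.
rewrite !inE; apply/idP/idP=> H; apply: agree_trans H _;
  [|rewrite agree_sym]; exact: agree_le le a.
Qed.

Definition sigma (s : srv) (j : 'I_k) (u : srv) : srv :=
  [ffun i => if i == j then ~~ s j else u i].

Definition Eopt (s : srv) (a b : V) : bool :=
  match a, b with
  | inl u, inl v => pathE u v
  | inr (j, u), inl v => agree j u s && (v == sigma s j u)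
  | inl v, inr (j, u) => agree j u s && (v == sigma s j u)
  | _, _ => false
  end.

Lemma Eopt_sym s : symmetric (Eopt s).
Proof. by case=> [u|[j u]] [v|[j' v]] //=; rewrite pathE_sym. Qed.

Lemma agree_sigma s j u : agree j (sigma s j u) u.
Proof.
apply/forallP=> i; apply/implyP=> ij; rewrite ffunE.
have -> : (i == j) = false by apply/negbTE; rewrite neq_ltn ij.
by [].
Qed.

Lemma Eopt_EG s a b : Eopt s a b -> EG a b.
Proof.
case: a b => [u|[j u]] [v|[j' v]] //=; case/andP=> _ /eqP ->; exact: agree_sigma.
Qed.

Definition Hopt (s : srv) : {set {set 'I_nV}} :=
  [set [set vid ab.1; vid ab.2] | ab in [set ab : V * V | Eopt s ab.1 ab.2]].

Lemma Hopt_edge s a b : Eopt s a b -> [set vid a; vid b] \in Hopt s.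
Proof. by move=> E; apply/imsetP; exists (a, b); rewrite ?inE. Qed.

Lemma EG_edge a b : EG a b -> [set vid a; vid b] \in edges_of G.
Proof. by move=> E; apply/imsetP; exists (vid a, vid b); rewrite // inE /G /= !vidK. Qed.

Lemma Hopt_sub s : Hopt s \subset edges_of G.
Proof.
apply/fintype.subsetP=> e /imsetP[[a b]]; rewrite inE /= => E ->.
exact: EG_edge (Eopt_EG E).
Qed.

Lemma rk_inj : injective rk.
Proof. by move=> u v /val_inj /enum_rank_inj. Qed.

Lemma conn_any s (H : {set {set 'I_nV}}) :
  (forall a b, Eopt s a b -> [set vid a; vid b] \in H) ->
  forall i, connects H r0 (ts_upto i s).
Proof.
move=> HE i.
have srvC : forall v, connect (adj H) r0 (vid (inl v)).
  suff: forall m v, rk v = m -> connect (adj H) r0 (vid (inl v)) by move=> X v; exact: X.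
  elim=> [|m IH] v rv.
    by have -> : v = srv0 by apply: rk_inj; rewrite rv rk_srv0.
  have mlt : (m < #|{: srv}|)%N by apply: ltnW; rewrite -rv; exact: ltn_ord.
  pose w := enum_val (Ordinal mlt).
  have rw : rk w = m by rewrite /rk /w enum_valK.
  apply: connect_trans (IH w rw) (connect1 _).
  by rewrite /adj; apply: HE; rewrite /= /pathE rw rv eqxx.
apply/allP=> x /mem_ts_upto[j [u [-> aus _]]].
apply: connect_trans (srvC (sigma s j u)) (connect1 _).
by rewrite /adj; apply: HE; rewrite /= aus eqxx.
Qed.

Lemma Hopt_feasible s : feasible G r0 (ts s) (Hopt s).
Proof. by rewrite /feasible Hopt_sub; apply: conn_any => a b; exact: Hopt_edge. Qed.

Lemma G_connects s i : connects (edges_of G) r0 (ts_upto i s).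
Proof. by apply: conn_any => a b E; exact: EG_edge (Eopt_EG E). Qed.

Lemma deg_le_nbrs (H : {set {set 'I_nV}}) x : H \subset edges_of G ->
  (deg H x <= #|[set y | [set x; y] \in H]|)%N.
Proof.
move=> sub; rewrite /deg.
apply: leq_trans (leq_imset_card (fun y => [set x; y]) _).
apply: subset_leq_card; apply/fintype.subsetP=> e; rewrite inE => /andP[eH xe].
have /imsetP[[a b] _ ee] := fintype.subsetP sub e eH.
subst e; move: xe eH; rewrite !inE /= => /orP[] /eqP -> eH; apply/imsetP.
- by exists b; rewrite // inE.
- by exists a; rewrite ?inE finset.setUC.
Qed.

Lemma nbrs_Hopt s x :
  [set y | [set x; y] \in Hopt s] \subset [set y | Eopt s (vval x) (vval y)].
Proof.
apply/fintype.subsetP=> y; rewrite !inE => /imsetP[[a b]]; rewrite inE /= => E.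
case/set2_eqP=> [[-> ->]|[-> ->]]; rewrite !vidK //; by rewrite Eopt_sym.
Qed.

Lemma card_vval (P : pred V) :
  #|[set y | P (vval y)]| = #|[set v | P v]|.
Proof.
rewrite -(card_imset _ vid_inj); apply: eq_card => y; rewrite !inE.
apply/idP/imsetP=> [Py|[v]]; first by exists (vval y); rewrite ?inE ?vvalK.
by rewrite inE => Pv ->; rewrite vidK.
Qed.

Lemma sigma_inj s j j' u u' : agree j u s -> agree j' u' s ->
  sigma s j u = sigma s j' u' -> u j = u' j' -> j = j' /\ u = u'.
Proof.
move=> a a' E uj.
have jj : j = j'.
  have key : forall (j1 j2 : 'I_k) u1 u2, agree j2 u2 s -> (j1 < j2)%N ->
      sigma s j1 u1 <> sigma s j2 u2.
    move=> j1 j2 u1 u2 a2 lt E12.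
    have := congr1 (fun f : srv => f j1) E12; rewrite /= !ffunE eqxx.
    have -> : (j1 == j2) = false by apply/negbTE; rewrite neq_ltn lt.
    rewrite (eqP (implyP (forallP a2 j1) lt)); by case: (s j1).
  case: (ltngtP j j') => [lt|lt|/val_inj //].
  - by case: (key _ _ _ _ a' lt E).
  - by case: (key _ _ _ _ a lt (esym E)).
subst j'; split=> //; apply/ffunP=> i.
case: (eqVneq i j) => [->//|ne].
have := congr1 (fun f : srv => f i) E; by rewrite /= !ffunE (negbTE ne).
Qed.

Lemma card_nbrs s w : (#|[set v | Eopt s w v]| <= 4)%N.
Proof.
case: w => [w0|[j u]].
  pose f (v : V) : bool * bool :=
    match v with inl v => (false, (rk w0 < rk v)%N) | inr (j, u) => (true, u j) end.
  rewrite -(@card_in_imset _ _ f); last first.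
    move=> [v|[j u]] [v'|[j' u']]; rewrite !inE //=.
    - move=> p p' [] E; apply: congr1; apply: rk_inj.
      move: p p' E; rewrite /pathE => /orP[] /eqP h1 /orP[] /eqP h2; lia.
    - case/andP=> a /eqP E; case/andP=> a' /eqP E' [] uj.
      by have [-> ->] := sigma_inj a a' (etrans (esym E) E') uj.
  apply: leq_trans (max_card _) _; by rewrite card_prod card_bool.
apply: leq_trans (_ : #|[set inl (sigma s j u) : V]| <= 4)%N; last by rewrite cards1.
apply: subset_leq_card; apply/fintype.subsetP=> v; rewrite !inE.
by case: v => [v|[j' v]] //= /andP[_ /eqP ->].
Qed.

Lemma deg_Hopt s x : (deg (Hopt s) x <= 4)%N.
Proof.
apply: leq_trans (deg_le_nbrs x (Hopt_sub s)) _.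
apply: leq_trans (subset_leq_card (nbrs_Hopt s x)) _.
by rewrite (card_vval (fun v => Eopt s (vval x) v)) card_nbrs.
Qed.

Section Lower.
Variable A0 : seq 'I_nV -> {set {set 'I_nV}}.
Hypothesis Hsub : forall t, A0 t \subset edges_of G.
Hypothesis Hmono : forall t x, A0 t \subset A0 (rcons t x).
Hypothesis Hconn : forall t, connects (edges_of G) r0 t -> connects (A0 t) r0 t.

Lemma mono_cat t t' : A0 t \subset A0 (t ++ t').
Proof.
elim/last_ind: t' => [|t' x IH]; first by rewrite cats0.
by rewrite -rcons_cat; apply: fintype.subset_trans IH (Hmono _ _).
Qed.

Lemma A_prefix i s : A0 (ts_upto i s) \subset A0 (ts s).
Proof. by have [t ->] := ts_upto_cat i s; exact: mono_cat. Qed.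

Definition cP (j : 'I_k) (s u : srv) : bool :=
  agree j u s && ([set vid (inr (j, u)); vid (inl s)] \in A0 (ts_upto j.+1 s)).

Lemma vid_inl_inr v p : vid (inr p) != vid (inl v).
Proof. by apply/eqP=> /vid_inj. Qed.

Lemma deg_ge s :
  (\sum_(j : 'I_k) #|[set u | cP j s u]| <= deg (A0 (ts s)) (vid (inl s)))%N.
Proof.
have -> : (\sum_(j : 'I_k) #|[set u | cP j s u]| = #|[set p : 'I_k * srv | cP p.1 s p.2]|)%N.
  rewrite -sum1dep_card -(pair_big_dep xpredT (fun j u => cP j s u) (fun _ _ => 1%N)) /=.
  by apply: eq_bigr => j _; rewrite sum1dep_card.
pose f (p : 'I_k * srv) := [set vid (inr p); vid (inl s)].
rewrite -(@card_in_imset _ _ f); last first.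
  move=> p q _ _ /set2_eqP[[/vid_inj [->] _ //]|[E _]].
  by move: (vid_inl_inr s p); rewrite E eqxx.
rewrite /deg; apply: subset_leq_card; apply/fintype.subsetP=> e /imsetP[[j u]].
rewrite inE /cP /= => /andP[_ eA] ->; rewrite inE !inE eqxx orbT andbT.
exact: (fintype.subsetP (A_prefix j.+1 s) _ eA).
Qed.

Lemma c_sum (j : 'I_k) : (2 ^ k <= \sum_(s : srv) #|[set u | cP j s u]|)%N.
Proof.
under eq_bigr => s _ do rewrite -sum1dep_card big_mkcond /=.
rewrite exchange_big /= -card_srv -sum1_card.
apply: leq_sum => u _.
set x := vid (inr (j, u)).
have xin : x \in ts_upto j.+1 u by apply: term_in; exact: agree_refl.
have := Hconn (G_connects u j.+1) => /allP /(_ x xin) cx.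
have xr : x != r0 by rewrite /x /r0 vid_inl_inr.
have [y yx] := connect_last_step cx xr.
have /imsetP[[a b]] := fintype.subsetP (Hsub _) _ yx.
rewrite inE /= => Gab /set2_eqP Hab.
have Gyx : G y x.
  case: Hab => [[-> ->]|[-> ->]] //; by rewrite /G EG_sym.
move: Gyx; rewrite /G /x vidK; case Ey: (vval y) => [v|[j' v]] //= avu.
rewrite (bigD1 v) //= /cP.
rewrite agree_sym avu /= (ts_upto_agree avu).
have -> : [set vid (inr (j, u)); vid (inl v)] = [set y; x] by rewrite finset.setUC -Ey vvalK.
by move: yx; rewrite /adj => ->.
Qed.

Lemma sum_deg : (k * 2 ^ k <= \sum_(s : srv) deg (A0 (ts s)) (vid (inl s)))%N.
Proof.
apply: leq_trans (_ : \sum_(s : srv) \sum_(j : 'I_k) #|[set u | cP j s u]| <= _)%N; last first.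
  by apply: leq_sum => s _; exact: deg_ge.
rewrite exchange_big /=.
apply: leq_trans (_ : \sum_(j : 'I_k) 2 ^ k <= _)%N; last by apply: leq_sum => j _; exact: c_sum.
by rewrite sum_nat_const card_ord.
Qed.

End Lower.

Lemma term0_in s : vid (inr (Ordinal k_gt0, s)) \in ts s.
Proof.
have [t ->] := ts_upto_cat 1 s; rewrite mem_cat.
by rewrite (term_in (agree_refl _ _)).
Qed.

Lemma deg_pos (H : {set {set 'I_nV}}) x :
  connect (adj H) r0 x -> x != r0 -> (0 < deg H x)%N.
Proof.
move=> c xr; have [y yx] := connect_last_step c xr.
apply/card_gt0P; exists [set y; x]; by rewrite !inE -/(adj H y x) yx eqxx orbT.
Qed.

Lemma term_r0 p : vid (inr p) != r0.
Proof. exact: vid_inl_inr. Qed.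

Lemma nV_eq : nV = (2 ^ k + k * 2 ^ k)%N.
Proof. by rewrite /nV card_sum card_prod card_ord card_srv. Qed.

End Comb.

Unset Implicit Arguments.
From HB Require Import structures.
From mathcomp Require Import all_boot all_order all_algebra.
From mathcomp Require Import all_classical all_reals all_analysis.
Import Order.TTheory GRing.Theory Num.Theory.
Local Open Scope ring_scope.
Import measurable_realfun.
From mathcomp Require Import lra.

Lemma yao (R : realType) (d : measure_display) (Omega : measurableType d)
  (P : probability Omega R) (I : finType) (i0 : I) (F : I -> Omega -> R) (L : R) :
  (forall i, measurable_fun [set: Omega] (EFin \o F i)) ->
  (forall i w, 0 <= F i w) -> 0 <= L ->
  (forall w, L * #|I|%:R <= \sum_i F i w) ->
  exists i, (L%:E <= \int[P]_w (F i w)%:E)%E.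
Proof.
move=> mF F0 L0 HL.
pose M i := (\int[P]_w (F i w)%:E)%E.
have S : ((L * #|I|%:R)%:E <= \sum_i M i)%E.
  rewrite /M -ge0_integral_sum //; last by move=> i w _; rewrite lee_fin.
  apply: (@le_trans _ _ (\int[P]_w (cst (L * #|I|%:R)%:E w))%E).
    rewrite integral_cst // [X in (_ * X)%E](_ : _ = 1%E) ?mule1 //; exact: probability_setT.
  apply: ge0_le_integral => //.
  - by move=> w _; rewrite lee_fin mulr_ge0.
  - exact: emeasurable_sum.
  - by move=> w _; rewrite sumEFin lee_fin.
pose i1 := [arg max_(i > i0) M i]%O.
have Hmax : forall j, (M j <= M i1)%E.
  by rewrite /i1; case: arg_maxP => // i _ H j; apply: H.
have S2 : ((L * #|I|%:R)%:E <= M i1 *+ #|I|)%E.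
  have -> : (M i1 *+ #|I| = \sum_(i : I) M i1)%E by rewrite sumr_const.
  apply: le_trans S _; apply: lee_sum => i _; exact: Hmax.
exists i1; move: S2; case E: (M i1) => [r| |] //.
- rewrite -EFin_natmul lee_fin => H; rewrite -/(M i1) E lee_fin.
  rewrite -(@ler_pM2r _ (#|I|%:R)); first by rewrite [X in _ <= X]mulr_natr.
  have c0 : (0 < #|I|)%N by apply/card_gt0P; exists i0.
  by rewrite ltr0n.
- by move=> _; rewrite -/(M i1) E leey.
- have : (0 <= M i1)%E by apply: integral_ge0 => w _; rewrite lee_fin.
  by rewrite E.
Qed.

Lemma meas_fin (R : realType) (d : measure_display) (Omega : measurableType d) n
  (h : Omega -> {set {set 'I_n}}) (g : {set {set 'I_n}} -> R) :
  (forall H, measurable [set w | h w = H]) ->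
  measurable_fun [set: Omega] (EFin \o (fun w => g (h w))).
Proof.
move=> mh _ Y mY.
have -> : ([set: Omega] `&` (EFin \o (fun w => g (h w))) @^-1` Y =
    \bigcup_(H in [set H | Y (g H)%:E]) [set w | h w = H])%classic.
  apply/seteqP; split => w /=.
  - by move=> [_ Yw]; exists (h w).
  - by move=> [H YH hw]; split => //; rewrite /= hw.
apply: fin_bigcup_measurable; first exact: finite_finset.
by move=> H _; exact: mh.
Qed.

Lemma deg_le_maxload (R : realType) n (H : {set {set 'I_n}}) v :
  (deg H v)%:R <= maxload R H (fun _ => 1%N).
Proof.
rewrite /maxload; apply: le_trans (le_bigmax _ _ v); by rewrite divr1.
Qed.

Lemma maxload_ge0 (R : realType) n (H : {set {set 'I_n}}) :
  0 <= maxload R H (fun _ => 1%N).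
Proof.
rewrite /maxload; apply: (big_ind (fun x : R => 0 <= x)) => //.
- by move=> x y x0 y0; rewrite le_max x0.
Qed.

Lemma maxload_le (R : realType) n (H : {set {set 'I_n}}) (c : nat) :
  (forall v, (deg H v <= c)%N) -> maxload R H (fun _ => 1%N) <= c%:R.
Proof.
move=> Hc; apply: bigmax_le => [|v _]; first exact: ler0n.
by rewrite divr1 ler_nat.
Qed.

Lemma ln_nV (R : realType) k : (0 < k)%N -> ln ((nV k)%:R : R) <= 3 * k%:R.
Proof.
move=> k0.
have n4 : (nV k <= 4 ^ k)%N.
  rewrite nV_eq -{1}(mul1n (2 ^ k)%N) -mulnDl add1n.
  have -> : (4 ^ k = 2 ^ k * 2 ^ k)%N by rewrite -expnMn.
  by rewrite leq_mul2r ltn_expl ?orbT.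
have npos : (0 < nV k)%N by rewrite nV_eq addn_gt0 expn_gt0.
apply: le_trans (_ : ln ((4 : R) ^+ k) <= _).
  rewrite ler_ln ?posrE ?ltr0n ?exprn_gt0 //.
  by rewrite -natrX ler_nat.
rewrite lnXn // [X in _ <= X]mulr_natr lerMn2r; apply/orP; right.
have -> : (4 : R) = 1 + 3 by [].
apply: le_ln1Dx; lra.
Qed.

Lemma maxload_pos_of (R : realType) k (k0 : (0 < k)%N) s (H : {set {set 'I_(nV k)}}) :
  connects H (r0 k) (@ts k s) -> 0 < maxload R H (fun _ => 1%N).
Proof.
move=> /allP /(_ _ (term0_in k0 s)) c.
have := deg_pos c (term_r0 _); rewrite -(ltr0n R) => dp.
exact: lt_le_trans dp (@deg_le_maxload R _ H _).
Qed.

Theorem theorem2 (R : realType) :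
  exists c : R, 0 < c /\
  forall N : nat, exists n : nat, (N <= n)%N /\
  forall (d : measure_display) (Omega : measurableType d)
         (P : probability Omega R) (A : Omega -> online_alg n),
    (forall w, valid_alg (A w)) -> measurable_alg A ->
    exists (G : rel 'I_n) (r : 'I_n) (ts : seq 'I_n),
      simple_graph G /\ connects (edges_of G) r ts /\
      0 < opt R G r (fun _ => 1%N) ts /\
      ((c * ln n%:R * opt R G r (fun _ => 1%N) ts)%:E
         <= \int[P]_w (maxload R (A w G r (fun _ => 1%N) ts) (fun _ => 1%N))%:E)%E.
Proof.
exists (12%:R)^-1; split; first by rewrite invr_gt0 ltr0n.
move=> N; pose k := N.+1; have k0 : (0 < k)%N by [].
exists (nV k); split.
  rewrite nV_eq; apply: leq_trans (leq_addl _ _); apply: leq_trans (leqnSn N) _.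
  by rewrite leq_pmulr ?expn_gt0.
move=> d Omega P A valid meas.
pose b1 := fun _ : 'I_(nV k) => 1%N.
have m1 : forall s : srv k, measurable_fun [set: Omega]
    (EFin \o (fun w => maxload R (A w (@G k) (r0 k) b1 (@ts k s)) b1)).
  move=> s; exact: (@meas_fin R d Omega _ (fun w => A w (@G k) (r0 k) b1 (@ts k s)) (fun H => maxload R H b1) (fun H => meas _ _ _ _ H)).
have m4 : forall w, k%:R * #|{: srv k}|%:R <=
    \sum_(s : srv k) maxload R (A w (@G k) (r0 k) b1 (@ts k s)) b1.
  move=> w.
  have V t := valid w (@G k) (r0 k) b1 t.
  have SD := @sum_deg k (A w (@G k) (r0 k) b1) (fun t => proj1 (V t))
    (fun t x => proj1 (proj2 (V t)) x) (fun t => proj2 (proj2 (V t))).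
  rewrite card_srv -natrM; apply: le_trans (_ : (\sum_(s : srv k)
     deg (A w (@G k) (r0 k) b1 (@ts k s)) (vid (inl s)))%:R <= _).
    by rewrite ler_nat.
  rewrite natr_sum; apply: ler_sum => s _; exact: deg_le_maxload.
have [s Hs] := @yao R d Omega P (srv k) (srv0 k)
  (fun s w => maxload R (A w (@G k) (r0 k) b1 (@ts k s)) b1) k%:R m1
  (fun s w => maxload_ge0 R _ _) (ler0n _ _) m4.
exists (@G k), (r0 k), (@ts k s).
have Hopt4 : opt R (@G k) (r0 k) b1 (@ts k s) <= 4%:R.
  rewrite /opt; apply: le_trans (bigmin_le_cond _ _ (Hopt_feasible s)) _.
  by apply: maxload_le => v; exact: deg_Hopt.
have Hpos : 0 < opt R (@G k) (r0 k) b1 (@ts k s).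
  rewrite /opt; apply: lt_bigmin => [|H /andP[_ cH]].
    exact: maxload_pos_of k0 s _ (G_connects s k).
  exact: maxload_pos_of k0 s _ cH.
split; first exact: G_simple.
split; first exact: G_connects.
split; first exact: Hpos.
apply: le_trans Hs; rewrite lee_fin.
have l0 : 0 <= ln ((nV k)%:R : R) by rewrite ln_ge0 // ler1n nV_eq addn_gt0 expn_gt0.
apply: le_trans (_ : 12%:R^-1 * (3 * k%:R) * 4%:R <= _); last first.
  lra.
have c0 : 0 <= (12%:R : R)^-1 by rewrite invr_ge0 ler0n.
apply: ler_pM; [|exact: ltW| |exact: Hopt4].
- by rewrite mulr_ge0.
- by rewrite ler_pM2l ?invr_gt0 //; exact: ln_nV.
Qed.
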